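(* Let $p\in(0,1)$, let $(a_j)_{j\ge1}$ be positive rational numbers with $\sum_{j=1}^\infty a_j=p$, and let $\epsilon:\mathbb N\to\mathbb R$ be monotonically non-increasing with $\lim_{N\to\infty}\epsilon(N)=0$ and $p-\sum_{j=1}^N a_j\le \epsilon(N)$ for all $N\in\mathbb N$. Let $X_1,X_2,\dots$ be independent Bernoulli$(1/2)$ random variables, run the algorithm described in the context, and let $N_M$ denote the number of series terms used when the algorithm terminates (the final value of the counter $N$). Then for every $n\in\mathbb N$, $$\Pr[N_M>n]<4\epsilon(n).$$ In addition, if there exist $r>1$, $K>0$ and $n_0$ such that $\epsilon(n)\le K/n^r$ for all $n\ge n_0$, then $\mathbb E[N_M]<\infty$.
   Context: The algorithm: initialise $N\leftarrow0$, $S\leftarrow0$, $E\leftarrow1$, $A\leftarrow0$, $s\leftarrow0$, $k\leftarrow0$. Repeat the following iteration: set $k\leftarrow k+1$ and $A\leftarrow A+s\cdot2^{-k}$; then, while none of the three conditions (i) $S+E\le A+2^{-k}$, (ii) $S>A+2^{-k}$, (iii) $S>A+\tfrac12 2^{-k}$ and $S+E\le A+\tfrac32 2^{-k}$ holds, do $N\leftarrow N+1$, $S\leftarrow S+a_N$, $E\leftarrow\epsilon(N)$; after this inner loop set $s\leftarrow0$ if (i) holds, else $s\leftarrow2$ if (ii) holds, else $s\leftarrow1$. The iteration is repeated until $X_k=0$ (coin $X_k$ is consumed at the end of iteration $k$). After the last iteration, output $Y=0$ if $s=0$, $Y=1$ if $s=2$, and $Y=X_{k+1}$ if $s=1$.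 *)

(* Defs.v *)
From HB Require Import structures.
From mathcomp Require Import all_boot all_order all_algebra.
From mathcomp Require Import all_classical all_reals all_analysis.
Set Implicit Arguments. Unset Strict Implicit. Unset Printing Implicit Defensive.
Import Order.TTheory GRing.Theory Num.Theory.
Import numFieldNormedType.Exports.
Local Open Scope classical_set_scope.
Local Open Scope ring_scope.

(* Control phase of the algorithm: about to start an outer iteration,
   inside the inner while loop, or halted. *)
Inductive phase := Outer | Inner | Halt.

Record state (R : Type) := St {
  stN : nat; stS : R; stE : R; stA : R; sts : nat; stk : nat; stph : phase }.

Section Algorithm.
Variables (R : realType) (a : nat -> rat) (eps : nat -> R) (X : nat -> bool).
(* a j is the j-th series term (j >= 1), eps N the tail bound,
   X k the k-th coin (k >= 1), true = 1, false = 0. *)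

Definition init_state : state R := St 0 0 1 0 0 0 Outer.

Definition cond_i (k : nat) (A S E : R) : bool := S + E <= A + 2 ^- k.
Definition cond_ii (k : nat) (A S E : R) : bool := S > A + 2 ^- k.
Definition cond_iii (k : nat) (A S E : R) : bool :=
  (S > A + 2^-1 * 2 ^- k) && (S + E <= A + 3%:R / 2 * 2 ^- k).

Definition alg_step (st : state R) : state R :=
  let: St n S0 E0 A0 s k ph := st in
  match ph with
  | Halt => st
  | Outer => let k' := k.+1 in St n S0 E0 (A0 + s%:R * 2 ^- k') s k' Inner
  | Inner =>
      if ~~ [|| cond_i k A0 S0 E0, cond_ii k A0 S0 E0 | cond_iii k A0 S0 E0] then
        St n.+1 (S0 + ratr (a n.+1)) (eps n.+1) A0 s k Inner
      else
        let s' := if cond_i k A0 S0 E0 then 0%N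
                  else if cond_ii k A0 S0 E0 then 2%N else 1%N in
        (* coin X_k is consumed at the end of iteration k; stop iff X_k = 0 *)
        St n S0 E0 A0 s' k (if X k then Outer else Halt)
  end.

Definition alg_run (t : nat) : state R := iter t alg_step init_state.

Definition alg_halted (t : nat) : bool :=
  if stph (alg_run t) is Halt then true else false.

(* N_M: the final value of the counter N when the algorithm terminates
   (arbitrarily 0 on the event that it never terminates). *)
Definition final_N : nat :=
  match pselect (exists t, alg_halted t) with
  | left H => stN (alg_run (ex_minn H))
  | right _ => 0%N
  end.
End Algorithm.

Definition indep_coins d (T : measurableType d) (R : realType)
  (P : probability T R) (X : nat -> T -> bool) : Prop :=
  forall (I : seq nat) (b : nat -> bool), uniq I ->
    P [set w | forall i, i \in I -> X i w = b i] =
    (\prod_(i <- I) P [set w | X i w = b i])%E.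

(* Main.v *)
Require Import Defs.
From HB Require Import structures.
From mathcomp Require Import all_boot all_order all_algebra.
From mathcomp Require Import all_classical all_reals all_analysis.
Import Order.TTheory GRing.Theory Num.Theory.
Import numFieldNormedType.Exports.
Local Open Scope classical_set_scope.
Local Open Scope ring_scope.
From mathcomp Require Import measurable_realfun lebesgue_integral.
From mathcomp Require Import ring lra.
Import Order.TTheory GRing.Theory Num.Theory.
Import numFieldNormedType.Exports.



Section Alg.
Variables (R : realType) (a : nat -> rat) (eps : nat -> R).

Lemma conds_hold (k : nat) (A S E : R) : 2 * E <= 2 ^- k ->
  [|| cond_i k A S E, cond_ii k A S E | cond_iii k A S E].
Proof.
rewrite /cond_i /cond_ii /cond_iii.
have : 0 < (2 ^- k : R) by rewrite invr_gt0 exprn_gt0.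
move: (2 ^- k : R) => h h0 hE.
have [//|H1] := leP (S + E) (A + h).
have [|H2] := ltP (A + h) S; first by rewrite orbT.
apply/orP; right; apply/orP; right; apply/andP; split; lra.
Qed.

Variable X : nat -> bool.

Lemma run_S t : alg_run a eps X t.+1 = alg_step a eps X (alg_run a eps X t).
Proof. by []. Qed.

Lemma inv_E t : (1 <= stN (alg_run a eps X t))%N ->
  stE (alg_run a eps X t) = eps (stN (alg_run a eps X t)).
Proof.
elim: t => [//|t IH]; rewrite run_S.
case: (alg_run a eps X t) IH => n S0 E0 A0 s k [] /= IH //.
by case: ifP => //= _ ; case: ifP.
Qed.

Lemma bound_N n j : (1 <= n)%N -> (1 <= j)%N -> X j = false ->
  2 * eps n <= 2 ^- j ->
  forall t, (stN (alg_run a eps X t) <= n)%N.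
Proof.
move=> n1 j1 Xj he t.
suff : let st := alg_run a eps X t in
  [/\ (stN st <= n)%N, (stph st = Outer -> (stk st < j)%N) &
      (stph st = Inner -> (stk st <= j)%N)] by case.
elim: t => [/=|t IH]; first by split => //.
have EE := inv_E t.
rewrite run_S; move: IH EE => /=.
case: (alg_run a eps X t) => N S0 E0 A0 s k [] /= [HN Ho Hi] EE //.
- by split => // _; apply: Ho.
- have kj := Hi erefl.
  case: ifP => Hc.
    split => //=.
    rewrite ltn_neqAle HN andbT; apply/eqP => eN.
    move: Hc; rewrite conds_hold //.
    rewrite EE eN //; apply: (le_trans he).
    rewrite lef_pV2 ?posrE ?exprn_gt0 //; apply: ler_weXn2l => //.
    by rewrite ler1n.
  case Xk: (X k); split => //= _.
  by rewrite ltn_neqAle kj andbT; apply/eqP => kj'; move: Xk; rewrite kj' Xj.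
Qed.
End Alg.



Section Alg2.
Variables (R : realType) (a : nat -> rat) (eps : nat -> R).

Lemma halt_stable X t : alg_halted a eps X t ->
  forall u, alg_run a eps X (u + t) = alg_run a eps X t.
Proof.
rewrite /alg_halted => H; elim => [//|u IH].
rewrite addSn run_S IH.
by case: (alg_run a eps X t) H => n S0 E0 A0 s k [].
Qed.

Lemma final_eq X t : alg_halted a eps X t ->
  final_N a eps X = stN (alg_run a eps X t).
Proof.
move=> Ht; rewrite /final_N; case: pselect => [H|]; last first.
  by move=> nH; exfalso; apply: nH; exists t.
case: ex_minnP => m Hm /(_ t Ht) mt.
by rewrite -(subnK mt) (halt_stable _ _ Hm).
Qed.

Lemma final_bound X n : (forall t, (stN (alg_run a eps X t) <= n)%N) ->
  (final_N a eps X <= n)%N.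
Proof.
move=> H; rewrite /final_N; case: pselect => // ?; exact: H.
Qed.

Lemma final_pos X : (0 < final_N a eps X)%N ->
  exists t, alg_halted a eps X t /\ final_N a eps X = stN (alg_run a eps X t).
Proof.
rewrite /final_N; case: pselect => // H _.
by case: ex_minnP => m Hm _; exists m.
Qed.

Lemma run_dep t : forall X Y, (forall i, (i <= t)%N -> X i = Y i) ->
  (stk (alg_run a eps X t) <= t)%N /\ alg_run a eps X t = alg_run a eps Y t.
Proof.
elim: t => [//|t IH] X Y XY.
rewrite !run_S.
have [kt e] := IH X Y (fun i it => XY i (leqW it)).
rewrite e in kt *; move: kt.
case: (alg_run a eps Y t) => n S0 E0 A0 s k [] /= kt'.
- by split.
- split; first by case: ifP => _ /=; apply: leqW.
  by case: ifP => // _; rewrite XY // (leq_trans kt' (leqnSn _)).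
- by split => //; apply: leqW.
Qed.
End Alg2.

Section Meas.
Variables (d : measure_display) (T : measurableType d) (X : nat -> T -> bool).
Hypothesis mX : forall i, measurable [set w | X i w].

Lemma fin_dep_meas m : forall (F : (nat -> bool) -> bool),
  (forall x y, (forall i, (i < m)%N -> x i = y i) -> F x = F y) ->
  measurable [set w | F (fun i => X i w)].
Proof.
elim: m => [|m IH] F HF.
  case Hc: (F (fun _ => false)).
    rewrite (_ : [set w | _] = setT) //; apply/seteqP; split => // w _ /=.
    by rewrite (HF _ (fun _ => false)).
  rewrite (_ : [set w | _] = set0) //; apply/seteqP; split => // w /=.
  by rewrite (HF _ (fun _ => false)) // Hc.
pose Fb b x := F (fun i => if i == m then b else x i).
have HFb b : measurable [set w | Fb b (fun i => X i w)].
  apply: IH => x y xy; apply: HF => i im.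
  by case: eqP => // /eqP ne; apply: xy; rewrite ltn_neqAle ne -ltnS.
rewrite (_ : [set w | _] = ([set w | X m w] `&` [set w | Fb true (fun i => X i w)])
   `|` (~` [set w | X m w] `&` [set w | Fb false (fun i => X i w)])).
  apply: measurableU; apply: measurableI => //; exact: measurableC.
apply/seteqP; split => w /=.
  have E b : X m w = b -> F (fun i => X i w) = Fb b (fun i => X i w).
    by move=> Xb; apply: HF => i _; case: eqP => // ->.
  case Xm: (X m w).
    by rewrite (E true) // => ?; left.
  by rewrite (E false) // => ?; right; split => //; rewrite Xm.
have E b : X m w = b -> F (fun i => X i w) = Fb b (fun i => X i w).
  by move=> Xb; apply: HF => i _; case: eqP => // ->.
case => -[Xm]; first by rewrite (E _ Xm).
by move/negP/negbTE: Xm => Xm; rewrite (E _ Xm).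
Qed.
End Meas.



Lemma exists_pow_lt (R : realType) (x : R) : 0 < x -> exists K : nat, 2 ^- K < x.
Proof.
move=> x0; exists (Num.truncn x^-1).+1.
set m := (Num.truncn x^-1).+1.
have h1 : x^-1 < m%:R by apply: truncnS_gt.
have h2 : (m%:R : R) < 2 ^+ m.
  by rewrite -natrX ltr_nat ltn_expl.
rewrite -(invrK x) ltf_pV2 ?posrE ?exprn_gt0 ?invr_gt0 //.
exact: lt_trans h1 h2.
Qed.

Lemma prod_const_E (R : realType) (s : seq nat) (c : R) :
  (\prod_(i <- s) c%:E = (c ^+ size s)%:E)%E.
Proof.
elim: s => [|x s IH]; first by rewrite big_nil.
by rewrite big_cons IH /= exprS EFinM.
Qed.

Section Main.
Variables (R : realType) (d : measure_display) (T : measurableType d)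
  (P : probability T R) (X : nat -> T -> bool) (a : nat -> rat) (eps : nat -> R).
Hypothesis mX : forall i, measurable [set w | X i w].
Hypothesis PX : forall i, P [set w | X i w] = (2^-1 : R)%:E.
Hypothesis indep : indep_coins P X.

Definition Bset (K : nat) := [set w | forall i, i \in iota 1 K -> X i w = true].

Lemma Bset_meas K : measurable (Bset K).
Proof.
rewrite (_ : Bset K = [set w | (fun x => all x (iota 1 K)) (fun i => X i w)]).
  have H := @fin_dep_meas d T X mX K.+1 (fun x => all x (iota 1 K)).
  apply: H => x y xy.
  apply: eq_in_all => i; rewrite mem_iota => /andP[_ iK].
  by rewrite xy // (leq_trans iK) // add1n.
by apply/seteqP; split => w /= H; [apply/allP => i /H | move=> i /(allP H)].
Qed.

Lemma PBset K : P (Bset K) = ((2^-1 : R) ^+ K)%:E.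
Proof.
rewrite /Bset indep ?iota_uniq //.
rewrite (eq_bigr (fun _ => (2^-1 : R)%:E)) ?prod_const_E ?size_iota //.
move=> i _; exact: PX.
Qed.

Definition Ev n := [set w | (n < final_N a eps (fun i => X i w))%N].

Lemma Ev_meas n : measurable (Ev n).
Proof.
rewrite (_ : Ev n = \bigcup_t [set w | (fun x => alg_halted a eps x t &&
   (n < stN (alg_run a eps x t))%N) (fun i => X i w)]).
  apply: bigcupT_measurable => t.
  have H := @fin_dep_meas d T X mX t.+1 (fun x => alg_halted a eps x t &&
   (n < stN (alg_run a eps x t))%N).
  apply: H => x y xy.
  have [_ e] := @run_dep R a eps t x y (fun i it => xy i it).
  by rewrite /alg_halted e.
apply/seteqP; split => w /=.
  move=> H; have /final_pos [t [Ht e]] : (0 < final_N a eps (fun i => X i w))%N.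
    exact: leq_ltn_trans H.
  by exists t => //=; rewrite Ht -e.
by case => t _ /andP[Ht Hn]; rewrite /Ev /= (@final_eq R a eps _ _ Ht).
Qed.

Hypothesis Hpos : forall n, (1 <= n)%N -> 0 < eps n.
Hypothesis Hmono : forall m n, (1 <= m <= n)%N -> eps n <= eps m.

Lemma part1 n : (1 <= n)%N -> (P (Ev n) < (4 * eps n)%:E)%E.
Proof.
move=> n1; have e0 := Hpos n n1.
have ex : exists K, 2 ^- K < 2 * eps n by apply: exists_pow_lt; lra.
case: (ex_minnP ex) => K' HK' Hmin.
case: K' HK' Hmin => [|K] HK Hmin.
  rewrite (le_lt_trans (probability_le1 _ (Ev_meas n))) // lte_fin.
  move: HK; rewrite expr0 invr1; lra.
have HK2 : 2 * eps n <= 2 ^- K.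
  rewrite leNgt; apply/negP => /Hmin; by rewrite ltnn.
have sub : Ev n `<=` Bset K.
  move=> w /= Hw i; rewrite mem_iota add1n => /andP[i1 iK].
  case Xi: (X i w) => //; exfalso; move: Hw; apply/negP; rewrite -leqNgt.
  apply: (@final_bound R a eps); apply: (@bound_N R a eps _ n i n1 i1 Xi).
  apply: (le_trans HK2).
  rewrite lef_pV2 ?posrE ?exprn_gt0 //; apply: ler_weXn2l => //.
  by rewrite ler1n.
apply: (le_lt_trans (le_measure P _ _ sub)); rewrite ?inE; first exact: Ev_meas.
  exact: Bset_meas.
apply: (@le_lt_trans _ _ ((2^-1:R)^+K)%:E).
  by rewrite le_eqVlt; apply/orP; left; apply/eqP; exact: PBset K.
rewrite lte_fin exprVn.
move: HK; rewrite exprS invfM; lra.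
Qed.
End Main.



Lemma geo_bound (R : realType) (z : R) m : 0 <= z < 1 ->
  \sum_(k < m) z ^+ k <= (1 - z)^-1.
Proof.
move=> /andP[z0 z1].
have E : (1 - z) * \sum_(k < m) z ^+ k = 1 - z ^+ m.
  elim: m => [|m IH]; first by rewrite big_ord0 expr0 mulr0 subrr.
  by rewrite big_ord_recr /= mulrDr IH exprS; ring.
have hz : 0 < 1 - z by lra.
rewrite -(ler_pM2l hz) E mulfV ?gt_eqF //.
by rewrite lerBlDr lerDl exprn_ge0.
Qed.

Section Cdef.
Variables (R : realType) (eps : nat -> R) (r Kc : R) (n0 : nat).
Hypothesis hr : 1 < r.
Hypothesis hK : 0 < Kc.
Hypothesis heps : forall n, (n0 <= n)%N -> eps n <= Kc / (n%:R `^ r).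

Definition yv j : R := (2 ^+ j.+1 * Kc) `^ r^-1.
Definition cv j : nat := (n0 + Num.truncn (yv j)).+1.
Definition qv : R := 2 `^ r^-1.

Lemma yv_ge0 j : 0 <= yv j. Proof. exact: powR_ge0. Qed.

Lemma cv_gt_y j : yv j < (cv j)%:R.
Proof.
rewrite /cv; apply: (lt_le_trans (truncnS_gt _)).
by rewrite ler_nat ltnS leq_addl.
Qed.

Lemma cv_eps j : 2 * eps (cv j) <= 2 ^- j.
Proof.
have r0 : 0 < r := lt_trans ltr01 hr.
have h1 : eps (cv j) <= Kc / ((cv j)%:R `^ r).
  by apply: heps; apply: leqW; apply: leq_addr.
have h2 : (2 ^+ j.+1 * Kc) <= (cv j)%:R `^ r.
  have -> : 2 ^+ j.+1 * Kc = yv j `^ r.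
    rewrite /yv -powRrM mulVf ?gt_eqF // powRr1 // mulr_ge0 // ?exprn_ge0 //.
    exact: ltW.
  apply: ge0_ler_powR; rewrite ?nnegrE ?yv_ge0 //; first exact: ltW.
  by apply: ltW; apply: cv_gt_y.
have hp : 0 < 2 ^+ j.+1 * Kc by rewrite mulr_gt0 // exprn_gt0.
have h3 : Kc / ((cv j)%:R `^ r) <= Kc / (2 ^+ j.+1 * Kc).
  rewrite ler_pM2l // lef_pV2 ?posrE //; exact: lt_le_trans h2.
have e : Kc / (2 ^+ j.+1 * Kc) = 2 ^- j.+1.
  by rewrite invfM mulrCA mulfV ?gt_eqF // mulr1.
move: (le_trans h1 h3); rewrite e exprS invfM => h.
have : 0 < 2 ^- j :> R by rewrite invr_gt0 exprn_gt0.
lra.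
Qed.

Lemma qv_lt2 : qv < 2.
Proof.
rewrite /qv /powR (_ : (2:R) == 0 = false); last by rewrite pnatr_eq0.
rewrite -[X in _ < X]lnK ?posrE // ltr_expR.
have l0 : 0 < ln (2 : R) by apply: ln_gt0; rewrite ltr1n.
rewrite gtr_pMl // invf_lt1 //; exact: lt_trans ltr01 hr.
Qed.

Lemma qv_ge0 : 0 <= qv. Proof. exact: powR_ge0. Qed.

Lemma cv_le j : (cv j)%:R <= (n0.+1)%:R + Kc `^ r^-1 * qv ^+ j.+1.
Proof.
have -> : Kc `^ r^-1 * qv ^+ j.+1 = yv j.
  rewrite /yv powRM ?exprn_ge0 ?(ltW hK) // mulrC; congr (_ * _).
  rewrite /qv -powR_mulrn ?powR_ge0 // powRAC powR_mulrn //.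
by rewrite /cv -addSn natrD lerD // truncn_le yv_ge0.
Qed.

Lemma series_fin :
  (\sum_(k <oo) (((cv k.+1)%:R * (2^-1 : R) ^+ k)%:E) < +oo)%E.
Proof.
set A : R := (n0.+1)%:R.
set B : R := Kc `^ r^-1.
have B0 : 0 <= B by apply: powR_ge0.
have q0 := qv_ge0; have q2 := qv_lt2.
set M : R := A * (1 - 2^-1)^-1 + B * qv ^+ 2 * (1 - qv / 2)^-1.
apply: (@le_lt_trans _ _ M%:E); last exact: ltry.
apply: lime_le.
  by apply: is_cvg_nneseries => n _ _; rewrite lee_fin mulr_ge0 // exprn_ge0 // invr_ge0.
apply: nearW => m; rewrite sumEFin lee_fin big_mkord.
apply: (@le_trans _ _ (\sum_(k < m) (A * (2^-1) ^+ k + B * qv ^+ 2 * (qv / 2) ^+ k))).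
  apply: ler_sum => k _.
  have h := cv_le k.+1.
  have hk : 0 <= (2^-1 : R) ^+ k by rewrite exprn_ge0 // invr_ge0.
  apply: (le_trans (ler_wpM2r hk h)).
  have -> : qv ^+ k.+2 = qv ^+ k * qv * qv by rewrite !exprSr.
  rewrite -/A -/B expr_div_n exprVn.
  set u := qv ^+ k; set v := (2 ^+ k : R)^-1.
  suff -> : A * v + B * qv ^+ 2 * (u * v) = (A + B * (u * qv * qv)) * v by [].
  by rewrite expr2; ring.
rewrite big_split /= -!mulr_sumr lerD //.
  apply: ler_wpM2l; first by rewrite ler0n.
  apply: geo_bound; rewrite invr_ge0 ler0n /=; rewrite invf_lt1 ?ltr1n //.
apply: ler_wpM2l; first by rewrite mulr_ge0 // exprn_ge0.
apply: geo_bound; rewrite divr_ge0 //= ltr_pdivrMr // mul1r //.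
Qed.
End Cdef.



Lemma halt_inv (R : realType) a (eps : nat -> R) X t :
  (stph (alg_run a eps X t) = Inner -> (1 <= stk (alg_run a eps X t))%N) /\
  (stph (alg_run a eps X t) = Halt -> (1 <= stk (alg_run a eps X t))%N /\
     X (stk (alg_run a eps X t)) = false).
Proof.
elim: t => [//|t IH]; rewrite run_S; move: IH.
case: (alg_run a eps X t) => n S0 E0 A0 s k [] /= [Hi Hh] //.
case: ifP => _ //=; case Xk: (X k) => //=; split => // _.
by split => //; apply: Hi.
Qed.

Lemma final_false (R : realType) a (eps : nat -> R) X :
  (0 < final_N a eps X)%N -> exists j, (0 < j)%N && ~~ X j.
Proof.
move=> /(final_pos) [t [Ht _]]; move: Ht; rewrite /alg_halted.
have [_ Hh] := halt_inv R a eps X t.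
case E: (stph _) => // _; have [k1 Xk] := Hh E.
by exists (stk (alg_run a eps X t)); rewrite k1 Xk.
Qed.

Lemma layer (R : realType) (F : nat) :
  ((F%:R : R)%:E = \sum_(n <oo) (((n < F)%N)%:R : R)%:E)%E.
Proof.
rewrite (nneseries_split 0 F); last by move=> k _; rewrite lee_fin ler0n.
rewrite (eseries0 (N := (0 + F)%N)); last by move=> i; rewrite add0n => iF _; rewrite ltnNge iF.
rewrite adde0 sumEFin add0n; congr (_%:E).
rewrite (eq_big_nat _ _ (F2 := fun _ => 1)); last by move=> i /andP[_ ->].
by rewrite sumr_const_nat subn0.
Qed.

Section Part2.
Variables (R : realType) (d : measure_display) (T : measurableType d)
  (P : probability T R) (X : nat -> T -> bool) (a : nat -> rat) (eps : nat -> R).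
Hypothesis mX : forall i, measurable [set w | X i w].
Hypothesis PX : forall i, P [set w | X i w] = (2^-1 : R)%:E.
Hypothesis indep : indep_coins P X.
Variables (r Kc : R) (n0 : nat).
Hypothesis hr : 1 < r.
Hypothesis hK : 0 < Kc.
Hypothesis heps : forall n, (n0 <= n)%N -> eps n <= Kc / (n%:R `^ r).

Let fN w := final_N a eps (fun i => X i w).
Let f w : \bar R := ((fN w)%:R : R)%:E.
Let g w : \bar R := (\sum_(k <oo) ((cv R r Kc n0 k.+1)%:R * \1_(Bset d T X k) w)%:E)%E.

Lemma f_meas : measurable_fun [set: T] (f : T -> \bar R).
Proof.
have -> : f = fun w => (\sum_(n <oo) (\1_(Ev R d T X a eps n) w)%:E)%E.
  apply/funext => w; rewrite /f layer; apply: eq_eseriesr => n _.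
  rewrite indicE; congr ((_%:R)%:E); rewrite /Ev; case: (boolP (n < fN w)%N) => H; [by rewrite mem_set | by rewrite memNset //; apply/negP].
have := @ge0_emeasurable_sum d T R setT (fun n w => (\1_(Ev R d T X a eps n) w)%:E) xpredT.
apply.
  by move=> k x _ _; rewrite lee_fin.
move=> k _; apply/measurable_EFinP; apply: measurable_indic.
exact: Ev_meas.
Qed.

Let gt k w : \bar R := ((cv R r Kc n0 k.+1)%:R * \1_(Bset d T X k) w)%:E.

Lemma gt_meas k : measurable_fun [set: T] (gt k).
Proof.
apply/measurable_EFinP; apply: measurable_funM => //.
apply: measurable_indic; exact: (Bset_meas _ _ _ mX).
Qed.

Lemma gt_ge0 k w : (0 <= gt k w)%E.
Proof. by rewrite lee_fin mulr_ge0 // ler0n. Qed.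

Lemma g_meas : measurable_fun [set: T] (g : T -> \bar R).
Proof.
have := @ge0_emeasurable_sum d T R setT gt xpredT.
apply; by [move=> k x _ _; apply: gt_ge0 | move=> k _; apply: gt_meas].
Qed.

Lemma int_gt k : (\int[P]_w gt k w = ((cv R r Kc n0 k.+1)%:R * (2^-1 : R) ^+ k)%:E)%E.
Proof.
have mB := Bset_meas _ _ _ mX k.
have hn : ((cv R r Kc n0 k.+1)%:R < 0 :> R) -> Bset d T X k = set0.
  by move=> h; exfalso; move: h; rewrite ltNge ler0n.
rewrite /gt (integralZl_indic _ (fun _ => Bset d T X k)) //.
rewrite integral_indic //.
rewrite setIT EFinM; congr (_ * _)%E; exact: (PBset _ _ _ _ _ PX indep).
Qed.

Lemma int_g : (\int[P]_w g w < +oo)%E.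
Proof.
have e := @integral_nneseries d T R P setT measurableT gt (fun n => gt_meas n)
  (fun n x _ => gt_ge0 n x).
rewrite (_ : g = fun w => (\sum_(n <oo) gt n w)%E) // e.
rewrite (eq_eseriesr (g := fun k => ((cv R r Kc n0 k.+1)%:R * (2^-1 : R) ^+ k)%:E)).
  exact: series_fin.
by move=> k _; apply: int_gt.
Qed.

Lemma f_le_g w : (f w <= g w)%E.
Proof.
have g0 : (0 <= g w)%E.
  by apply: nneseries_ge0 => k _ _; apply: gt_ge0.
case: (posnP (fN w)) => [e|hpos].
  by rewrite /f e.
have [j0 Hj0] := final_false R a eps _ hpos.
have exj : exists j, (fun j => (0 < j)%N && ~~ X j w) j by exists j0.
case: (ex_minnP exj) => j /andP[j1 Xj] jmin.
move/negbTE: Xj => Xj.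
have hb : (fN w <= cv R r Kc n0 j)%N.
  apply: final_bound; apply: (bound_N R a eps _ (cv R r Kc n0 j) j _ j1 Xj).
    by [].
  exact: (cv_eps R eps r Kc n0 hr hK heps j).
case: j j1 Xj jmin hb => // j' _ Xj jmin hb.
have hB : Bset d T X j' w.
  move=> i; rewrite mem_iota add1n ltnS => /andP[i1 ij].
  case Xi: (X i w) => //; exfalso.
  have := jmin i; rewrite i1 Xi /= => /(_ isT); rewrite ltnNge ij //.
have h1 : (f w <= gt j' w)%E.
  by rewrite /f /gt lee_fin indicE mem_set // mulr1 ler_nat.
apply: (le_trans h1).
apply: (le_trans _ (nneseries_lim_ge (P := xpredT) (m := 0) j'.+1 _)); last first.
  by move=> k _ _; apply: gt_ge0.
rewrite big_nat_recr //=; apply: leeDr.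
by apply: sume_ge0 => k _; apply: gt_ge0.
Qed.

Lemma part2 : (\int[P]_w f w < +oo)%E.
Proof.
apply: le_lt_trans int_g.
apply: ge0_le_integral => //.
- by move=> w _; rewrite lee_fin ler0n.
- exact: f_meas.
- exact: g_meas.
- by move=> w _; apply: f_le_g.
Qed.
End Part2.



Lemma eps_pos (R : realType) (p : R) (a : nat -> rat) (eps : nat -> R) :
  (forall j, (1 <= j)%N -> 0 < a j) ->
  (fun N => \sum_(1 <= j < N.+1) (ratr (a j) : R)) @ \oo --> p ->
  (forall N, (1 <= N)%N -> p - \sum_(1 <= j < N.+1) (ratr (a j) : R) <= eps N) ->
  forall n, (1 <= n)%N -> 0 < eps n.
Proof.
move=> apos cv he n n1.
set u := fun N => \sum_(1 <= j < N.+1) (ratr (a j) : R).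
have uS N : u N.+1 = u N + ratr (a N.+1) by rewrite /u big_nat_recr.
have nd : nondecreasing_seq u.
  apply/nondecreasing_seqP => N; rewrite uS lerDl ler0q ltW //; exact: apos.
have cu : cvgn u by apply/cvg_ex; exists p.
have lp : limn u = p by apply: cvg_lim.
have h1 := nondecreasing_cvgn_le nd cu n.+1; rewrite lp in h1.
have h2 : 0 < (ratr (a n.+1) : R) by rewrite ltr0q; exact: apos.
have := he n n1; rewrite -/(u n).
move: h1; rewrite uS; lra.
Qed.

Theorem theorem3 (R : realType) (d : measure_display) (T : measurableType d)
  (P : probability T R) (X : nat -> T -> bool)
  (p : R) (a : nat -> rat) (eps : nat -> R) :
  0 < p < 1 ->
  (forall j, (1 <= j)%N -> 0 < a j) ->
  (fun N => \sum_(1 <= j < N.+1) (ratr (a j) : R)) @ \oo --> p ->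
  (forall m n, (1 <= m <= n)%N -> eps n <= eps m) ->
  eps @ \oo --> (0 : R) ->
  (forall N, (1 <= N)%N -> p - \sum_(1 <= j < N.+1) (ratr (a j) : R) <= eps N) ->
  (forall i, measurable [set w | X i w]) ->
  (forall i, P [set w | X i w] = (2^-1 : R)%:E) ->
  indep_coins P X ->
  (forall n, (1 <= n)%N ->
     (P [set w | (n < final_N a eps (fun i => X i w))%N] < (4 * eps n)%:E)%E)
  /\
  ((exists (r K : R) (n0 : nat), 1 < r /\ 0 < K /\
       forall n, (n0 <= n)%N -> eps n <= K / (n%:R `^ r)) ->
   (\int[P]_w ((final_N a eps (fun i => X i w))%:R : R)%:E < +oo)%E).
Proof.
move=> _ apos cvp _ _ he mX PX ind; split.
  move=> n n1.
  exact: (part1 R d T P X a eps mX PX ind (@eps_pos _ _ _ _ apos cvp he) n n1).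
move=> [r [Kc [n0 [hr [hK heps]]]]].
exact: (part2 R d T P X a eps mX PX ind r Kc n0 hr hK heps).
Qed.
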